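(* Let $X$ and $Y$ be completely regular Hausdorff spaces and let $c: X\times Y\to\mathbb{R}$ be a bounded function with property (H). Set $$A:=\{\phi^{c\bar c}+\inf_Y\phi^c:\ \phi\in C_b(X)\}\subseteq C_b(X),\qquad B:=\{\phi^{c}-\inf_Y\phi^c:\ \phi\in C_b(X)\}\subseteq C_b(Y).$$ Then the closures $\overline{A}^{\mathcal{T}_p}$ (in $(C_b(X),\mathcal{T}_p)$) and $\overline{B}^{\mathcal{T}_p}$ (in $(C_b(Y),\mathcal{T}_p)$) are uniformly bounded and equicontinuous, i.e. $\overline{A}^{\mathcal{T}_p}\in\mathcal{E}(X)$ and $\overline{B}^{\mathcal{T}_p}\in\mathcal{E}(Y)$. In particular they are compact in $(C_b(X),\mathcal{T}_p)$ and $(C_b(Y),\mathcal{T}_p)$ respectively, and $\overline{A}^{\mathcal{T}_p}\times\overline{B}^{\mathcal{T}_p}$ is compact in the product space $(C_b(X),\mathcal{T}_p)\times(C_b(Y),\mathcal{T}_p)$.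
   Context: $C_b(Z)$ denotes the space of real-valued bounded continuous functions on $Z$; $\mathcal{T}_p$ is the topology of pointwise convergence on $C_b(Z)$; $\mathcal{E}(Z)$ is the family of uniformly bounded equicontinuous subsets of $C_b(Z)$. For $\xi: X\to\mathbb{R}$, $\xi^c(y):=\inf_{x\in X}\{c(x,y)-\xi(x)\}$; for $\zeta:Y\to\mathbb{R}$, $\zeta^{\bar c}(x):=\inf_{y\in Y}\{c(x,y)-\zeta(y)\}$; $\phi^{c\bar c}:=(\phi^c)^{\bar c}$. Define $\overline{d}_c(x,x'):=\sup_{y\in Y}|c(x,y)-c(x',y)|$ and $\underline{d}_c(y,y'):=\sup_{x\in X}|c(x,y)-c(x,y')|$. The function $c$ has property (H) if for every $x_0\in X$, $\lim_{x\to x_0}\overline{d}_c(x,x_0)=0$, and for every $y_0\in Y$, $\lim_{y\to y_0}\underline{d}_c(y,y_0)=0$ (limits in the topologies of $X$ and $Y$). *)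

(* Defs.v *)
From HB Require Import structures.
From mathcomp Require Import all_boot all_order all_algebra.
From mathcomp Require Import all_classical all_reals all_analysis.
Set Implicit Arguments. Unset Strict Implicit. Unset Printing Implicit Defensive.
Import Order.TTheory GRing.Theory Num.Theory.
Import numFieldNormedType.Exports.
Local Open Scope classical_set_scope.
Local Open Scope ring_scope.

Definition Cb {R : realType} {Z : topologicalType} : set (Z -> R) :=
  [set f | continuous f /\ exists M : R, forall z, `|f z| <= M].

Definition ctrans {R : realType} {X Y : Type} (c : X -> Y -> R) (xi : X -> R)
  : Y -> R := fun y => inf [set c x y - xi x | x in [set: X]].

Definition cbartrans {R : realType} {X Y : Type} (c : X -> Y -> R) (zeta : Y -> R)
  : X -> R := fun x => inf [set c x y - zeta y | y in [set: Y]].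

Definition infY {R : realType} {Y : Type} (g : Y -> R) : R :=
  inf [set g y | y in [set: Y]].

Definition dbar {R : realType} {X Y : Type} (c : X -> Y -> R) (x x' : X) : R :=
  sup [set `|c x y - c x' y| | y in [set: Y]].

Definition dunder {R : realType} {X Y : Type} (c : X -> Y -> R) (y y' : Y) : R :=
  sup [set `|c x y - c x y'| | x in [set: X]].

Definition propertyH {R : realType} {X Y : topologicalType} (c : X -> Y -> R) :=
  (forall x0 : X, (fun x => dbar c x x0) @ x0 --> (0 : R)) /\
  (forall y0 : Y, (fun y => dunder c y y0) @ y0 --> (0 : R)).

Definition bounded_fun2 {R : realType} {X Y : Type} (c : X -> Y -> R) :=
  exists M : R, forall x y, `|c x y| <= M.

Definition setA {R : realType} {X Y : topologicalType} (c : X -> Y -> R) : set (X -> R) :=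
  [set (fun x => cbartrans c (ctrans c phi) x + infY (ctrans c phi))
    | phi in (@Cb R X)].

Definition setB {R : realType} {X Y : topologicalType} (c : X -> Y -> R) : set (Y -> R) :=
  [set (fun y => ctrans c phi y - infY (ctrans c phi)) | phi in (@Cb R X)].

(* closure in (C_b(Z), T_p): subspace closure = ambient pointwise closure meet C_b(Z) *)
Definition ptws_closure {R : realType} {Z : topologicalType} (F : set (Z -> R))
  : set (Z -> R) := closure (F : set {ptws Z -> R}) `&` (@Cb R Z).

Definition unif_bounded {R : realType} {Z : Type} (F : set (Z -> R)) :=
  exists M : R, forall f, F f -> forall z, `|f z| <= M.

Definition in_E {R : realType} {Z : topologicalType} (F : set (Z -> R)) :=
  and (forall f, F f -> (@Cb R Z) f) (and (unif_bounded F) (@equicontinuous Z R^o _ F id)).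

(* Main.v *)
Require Import Defs.
From HB Require Import structures.
From mathcomp Require Import all_boot all_order all_algebra.
From mathcomp Require Import all_classical all_reals all_analysis.
From mathcomp Require Import ring lra.
Import Order.TTheory GRing.Theory Num.Theory.
Import numFieldNormedType.Exports.
Local Open Scope classical_set_scope.
Local Open Scope ring_scope.
Set Implicit Arguments. Unset Strict Implicit.

Lemma inf_le_at (R : realType) (T : Type) (g : T -> R) m t :
  (forall t, m <= g t) -> inf [set g t | t in [set: T]] <= g t.
Proof.
move=> Hm; apply: ge_inf; last by exists t.
by exists m => _ [s _ <-]; exact: Hm.
Qed.

Lemma le_inf_at (R : realType) (T : Type) (g : T -> R) m (t0 : T) :
  (forall t, m <= g t) -> m <= inf [set g t | t in [set: T]].
Proof.
move=> Hm; apply: lb_le_inf; first by exists (g t0), t0.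
by move=> _ [s _ <-]; exact: Hm.
Qed.

Lemma img_empty (R : realType) (T : Type) (g : T -> R) :
  ~ (exists t : T, True) -> [set g t | t in [set: T]] = set0.
Proof.
move=> nT; apply/seteqP; split => // y [t _ _]; apply: nT; by exists t.
Qed.

Lemma inf_norm_bd (R : realType) (T : Type) (g : T -> R) B :
  0 <= B -> (forall t, `|g t| <= B) -> `|inf [set g t | t in [set: T]]| <= B.
Proof.
move=> B0 Hb; have [[t0 _]|nT] := pselect (exists t : T, True); last first.
  by rewrite img_empty // inf0 normr0.
have Hm : forall t, - B <= g t by move=> t; have := Hb t; rewrite ler_norml => /andP[].
have h1 := le_inf_at t0 Hm.
have h2 := inf_le_at t0 Hm.
have := Hb t0; rewrite ler_norml => /andP[_ h3].
rewrite ler_norml; apply/andP; split => //; exact: le_trans h2 h3.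
Qed.

Lemma inf_lip (R : realType) (T : Type) (g h : T -> R) m d :
  0 <= d -> (forall t, m <= g t) -> (forall t, m <= h t) ->
  (forall t, `|g t - h t| <= d) ->
  `|inf [set g t | t in [set: T]] - inf [set h t | t in [set: T]]| <= d.
Proof.
move=> d0 Hg Hh Hd; have [[t0 _]|nT] := pselect (exists t : T, True); last first.
  by rewrite !img_empty // subrr normr0.
have e1 : inf [set h t | t in [set: T]] - d <= inf [set g t | t in [set: T]].
  apply: (le_inf_at t0) => t; have := inf_le_at t Hh.
  have := Hd t; rewrite ler_norml => /andP[? ?]; lra.
have e2 : inf [set g t | t in [set: T]] - d <= inf [set h t | t in [set: T]].
  apply: (le_inf_at t0) => t; have := inf_le_at t Hg.
  have := Hd t; rewrite ler_norml => /andP[? ?]; lra.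
rewrite ler_norml; apply/andP; split; lra.
Qed.
Section Psi.
Variables (R : realType) (X Y : Type) (c : X -> Y -> R) (K : R).
Hypothesis K0 : 0 <= K.
Hypothesis cK : forall x y, `|c x y| <= K.
Variables (phi : X -> R) (Mp : R).
Hypothesis HMp : forall x, `|phi x| <= Mp.

Let psi := ctrans c phi.
Let a := infY psi.

Lemma gbd x y : `|c x y - phi x| <= K + `|Mp|.
Proof.
apply: le_trans (ler_normB _ _) _; apply: lerD => //.
exact: le_trans (HMp x) (ler_norm _).
Qed.

Lemma glb x y : - (K + `|Mp|) <= c x y - phi x.
Proof. by have := gbd x y; rewrite ler_norml => /andP[]. Qed.

Lemma psi_bd y : `|psi y| <= K + `|Mp|.
Proof. apply: inf_norm_bd => [|x]; [exact: addr_ge0|exact: gbd]. Qed.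

Lemma psi_lip y y' d : 0 <= d -> (forall x, `|c x y - c x y'| <= d) ->
  `|psi y - psi y'| <= d.
Proof.
move=> d0 Hd; apply: (inf_lip (m := - (K + `|Mp|))) => // [x|x|x].
- exact: glb. - exact: glb.
by have -> : c x y - phi x - (c x y' - phi x) = c x y - c x y' by ring.
Qed.

Lemma psi_osc y y' : `|psi y - psi y'| <= K + K.
Proof.
apply: psi_lip => [|x]; first exact: addr_ge0.
exact: le_trans (ler_normB _ _) (lerD (cK _ _) (cK _ _)).
Qed.

Lemma a_le y : a <= psi y.
Proof.
apply: (inf_le_at (m := - (K + `|Mp|))) => t.
by have := psi_bd t; rewrite ler_norml => /andP[].
Qed.

Lemma a_ge y : psi y - (K + K) <= a.
Proof.
apply: (le_inf_at y) => t.
by have := psi_osc y t; rewrite ler_norml => /andP[_]; lra.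
Qed.

Lemma B_bd y : `|psi y - a| <= K + K + K.
Proof.
have := a_le y; have := a_ge y; rewrite ler_norml => ? ?; apply/andP; split; lra.
Qed.

Lemma hlb x y : - K - (a + K + K) <= c x y - psi y.
Proof.
have := a_ge y; have := cK x y; rewrite ler_norml => /andP[? ?] ?; lra.
Qed.

Lemma A_bd x : `|cbartrans c psi x + a| <= K + K + K.
Proof.
have [[y0 _]|nY] := pselect (exists y : Y, True); last first.
  rewrite /cbartrans /a /infY !img_empty // inf0 addr0 normr0.
  by move: K0; lra.
have h1 := le_inf_at y0 (hlb x).
have h2 := inf_le_at y0 (hlb x).
have := a_le y0; have := cK x y0; rewrite ler_norml => /andP[? ?] ?.
rewrite /cbartrans; rewrite ler_norml; apply/andP; split; lra.
Qed.

Lemma A_lip x x' d : 0 <= d -> (forall y, `|c x y - c x' y| <= d) ->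
  `|cbartrans c psi x + a - (cbartrans c psi x' + a)| <= d.
Proof.
move=> d0 Hd; have -> : forall u v : R, u + a - (v + a) = u - v by move=> ? ?; ring.
apply: (inf_lip (m := - K - (a + K + K))) => // [y|y|y].
- exact: hlb. - exact: hlb.
by have -> : c x y - psi y - (c x' y - psi y) = c x y - c x' y by ring.
Qed.

End Psi.
Lemma generic (R : realType) (Z : topologicalType) (S : set (Z -> R)) (K : R) :
  (forall f, S f -> forall z, `|f z| <= K) ->
  (forall z0 e, 0 < e -> \forall z \near z0, forall f, S f -> `|f z0 - f z| <= e) ->
  in_E (ptws_closure S) /\ compact (ptws_closure S : set {ptws Z -> R}).
Proof.
move=> hb hc.
have ecS : @equicontinuous Z R^o _ S id.
  move=> z0 E; rewrite -entourage_ballE => -[e /= e0 He].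
  have h2 := hc z0 (e / 2) ltac:(by rewrite divr_gt0).
  near=> z => f Sf.
  apply: He; rewrite /= -ball_normE /ball_.
  have he : e / 2 < e by rewrite ltr_pdivrMr // ltr_pMr // ltr1n.
  rewrite /=; apply: (le_lt_trans _ he); move: f Sf; near: z; exact: h2.
pose C := [set f : {ptws Z -> R} | forall z, `[-K, K]%classic (f z)].
have cC : compact C.
  have T1 := (@tychonoff Z (fun=> R) (fun=> `[-K, K]%classic) (fun=> @segment_compact R (-K) K)).
  exact: T1.
have clC : closed C.
  apply: compact_closed cC; apply: hausdorff_product => z; exact: Rhausdorff.
have SC : (S : set {ptws Z -> R}) `<=` C.
  move=> f Sf z /=; rewrite in_itv /= -ler_norml; exact: hb.
have clSC : closure (S : set {ptws Z -> R}) `<=` C.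
  by rewrite (closure_id C).1 //; exact: closureS.
have ecl : @equicontinuous Z R^o _ (closure (S : set {ptws Z -> R})) id.
  exact: equicontinuous_closure.
have clCb : closure (S : set {ptws Z -> R}) `<=` @Cb R Z.
  move=> f Sf; split; first exact: (equicontinuous_continuous ecl).
  exists K => z; have := clSC _ Sf z; rewrite /= in_itv /= -ler_norml; exact.
have -> : ptws_closure S = closure (S : set {ptws Z -> R}).
  by rewrite /ptws_closure; apply/setIidl.
split; last first.
  apply: (subclosed_compact _ cC) => //; exact: closed_closure.
split; first exact: clCb.
split; last exact: ecl.
exists K => f Sf z; have := clSC _ Sf z; rewrite /= in_itv /= -ler_norml; exact.
Unshelve. all: by end_near. Qed.

Theorem mainTheorem2 (R : realType) (X Y : topologicalType)
  (crX : completely_regular_space X) (hX : hausdorff_space X)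
  (crY : completely_regular_space Y) (hY : hausdorff_space Y)
  (c : X -> Y -> R) (cbd : bounded_fun2 c) (cH : propertyH c) :
  in_E (ptws_closure (setA c)) /\ in_E (ptws_closure (setB c)) /\
  compact (ptws_closure (setA c) : set {ptws X -> R}) /\
  compact (ptws_closure (setB c) : set {ptws Y -> R}) /\
  compact (ptws_closure (setA c) `*` ptws_closure (setB c)
            : set ({ptws X -> R} * {ptws Y -> R})%type).
Proof.
case: cbd => M HM.
have K0 : 0 <= `|M| by [].
have cK : forall x y, `|c x y| <= `|M|.
  by move=> x y; exact: le_trans (HM x y) (ler_norm M).
have [EA cA] : in_E (ptws_closure (setA c)) /\
    compact (ptws_closure (setA c) : set {ptws X -> R}).
  apply: (@generic R X (setA c) (`|M| + `|M| + `|M|)).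
    move=> _ [phi [_ [Mp HMp]] <-] x /=; exact: A_bd.
  move=> z0 e e0.
  have h := (cvgrPdist_lt _ _).1 (cH.1 z0) e e0.
  have key : forall z, `|0 - dbar c z z0| < e -> forall f, setA c f ->
      `|f z0 - f z| <= e.
    move=> z hz _ [phi [_ [Mp HMp]] <-] /=; rewrite distrC.
    apply: (A_lip K0 cK HMp) => [|y]; first exact: ltW.
    apply: le_trans (ltW (le_lt_trans (ler_norm _) _)); last first.
      by rewrite distrC subr0 in hz; exact: hz.
    apply: ub_le_sup; last by exists y.
    exists (`|M| + `|M|) => _ [t _ <-].
    exact: le_trans (ler_normB _ _) (lerD (cK _ _) (cK _ _)).
  near=> z; apply: key; near: z; exact: h.
have [EB cB] : in_E (ptws_closure (setB c)) /\
    compact (ptws_closure (setB c) : set {ptws Y -> R}).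
  apply: (@generic R Y (setB c) (`|M| + `|M| + `|M|)).
    move=> _ [phi [_ [Mp HMp]] <-] y /=; exact: B_bd.
  move=> z0 e e0.
  have h := (cvgrPdist_lt _ _).1 (cH.2 z0) e e0.
  have key : forall z, `|0 - dunder c z z0| < e -> forall f, setB c f ->
      `|f z0 - f z| <= e.
    move=> z hz _ [phi [_ [Mp HMp]] <-] /=.
    have -> : forall u v w : R, u - w - (v - w) = - (v - u) by move=> ? ? ?; ring.
    rewrite normrN.
        apply: (psi_lip cK HMp) => [|x]; first exact: ltW.
    apply: le_trans (ltW (le_lt_trans (ler_norm _) _)); last first.
      by rewrite distrC subr0 in hz; exact: hz.
    apply: ub_le_sup; last by exists x.
    exists (`|M| + `|M|) => _ [t _ <-].
    exact: le_trans (ler_normB _ _) (lerD (cK _ _) (cK _ _)).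
  near=> z; apply: key; near: z; exact: h.
do 4!(split => //).
exact: compact_setX.
Unshelve. all: by end_near.
Qed.
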